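(* Let $(\Omega,\mathbb B(\Omega),\mu,T)$ be a measure-preserving dynamical system and $\mathbf X$ an $\mathbb R^N$-valued random vector on $(\Omega,\mathbb B(\Omega))$. Then for all $d\in\mathbb N$, $$h^{\mathbf X}_{\mu,\mathrm{cond}}(T,d)\le h^{\mathbf X}_{\mu,\triangle}(T,d).$$ Moreover, if for some $d_0\in\mathbb N$ it holds $h^{\mathbf X}_\mu(T,d_0+1)\le h^{\mathbf X}_\mu(T,d_0)$, then $$h^{\mathbf X}_{\mu,\mathrm{cond}}(T,d_0)\le h^{\mathbf X}_{\mu,\triangle}(T,d_0)\le h^{\mathbf X}_{\mu}(T,d_0).$$
   Context: A measure-preserving dynamical system $(\Omega,\mathbb B(\Omega),\mu,T)$ consists of a nonempty topological space $\Omega$ with Borel $\sigma$-algebra $\mathbb B(\Omega)$, a probability measure $\mu$, and a measurable map $T:\Omega\to\Omega$ with $\mu(T^{-1}B)=\mu(B)$ for all $B\in\mathbb B(\Omega)$. For a finite partition $\mathcal P=\{P_0,\dots,P_l\}\subset\mathbb B(\Omega)$ of $\Omega$: $H(\mathcal P)=-\sum_{P\in\mathcal P}\mu(P)\ln\mu(P)$ (with $0\ln0=0$); $\mathcal P_n$ is the partition consisting of the sets $P_{a_0}\cap T^{-1}(P_{a_1})\cap\dots\cap T^{-(n-1)}(P_{a_{n-1}})$, $a_i\in\{0,\dots,l\}$. Let $\Pi_d$ be the set of permutations of $\{0,1,\dots,d\}$. A vector $(x_0,\dots,x_d)\in\mathbb R^{d+1}$ has ordinal pattern $\pi=(r_0,\dots,r_d)\in\Pi_d$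 if $x_{r_0}\ge x_{r_1}\ge\dots\ge x_{r_d}$ and $r_{l-1}>r_l$ whenever $x_{r_{l-1}}=x_{r_l}$. For a random vector $\mathbf X=(X_1,\dots,X_N)$ and $d\in\mathbb N$, the ordinal partition $\mathcal P^{\mathbf X}(d)$ consists of the sets $P_{(\pi_1,\dots,\pi_N)}=\{\omega: (X_i(T^{d}\omega),X_i(T^{d-1}\omega),\dots,X_i(T\omega),X_i(\omega))\text{ has ordinal pattern }\pi_i\text{ for } i=1,\dots,N\}$, $\pi_i\in\Pi_d$. Permutation entropy: $h^{\mathbf X}_\mu(T,d)=\frac1d H(\mathcal P^{\mathbf X}(d))$. Sorting entropy: $h^{\mathbf X}_{\mu,\triangle}(T,d)=H(\mathcal P^{\mathbf X}(d+1))-H(\mathcal P^{\mathbf X}(d))$. Conditional entropy of ordinal patterns: $h^{\mathbf X}_{\mu,\mathrm{cond}}(T,d)=H(\mathcal P^{\mathbf X}(d)_2)-H(\mathcal P^{\mathbf X}(d))$. *)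

(* Defs.v *)
From Stdlib Require Import Reals.
From mathcomp Require Import all_boot all_fingroup.
Set Implicit Arguments. Unset Strict Implicit. Unset Printing Implicit Defensive.

Definition set_ (A : Type) := A -> Prop.

Definition is_topology (Omega : Type) (opens : set_ (set_ Omega)) : Prop :=
  opens (fun _ => False) /\ opens (fun _ => True) /\
  (forall U V, opens U -> opens V -> opens (fun w => U w /\ V w)) /\
  (forall (Fam : set_ (set_ Omega)), (forall U, Fam U -> opens U) ->
      opens (fun w => exists U, Fam U /\ U w)).

Definition is_sigma_algebra (Omega : Type) (F : set_ (set_ Omega)) : Prop :=
  F (fun _ => True) /\
  (forall A, F A -> F (fun w => ~ A w)) /\
  (forall A : nat -> set_ Omega, (forall n, F (A n)) -> F (fun w => exists n, A n w)).

Definition borel (Omega : Type) (opens : set_ (set_ Omega)) (A : set_ Omega) : Prop :=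
  forall F, is_sigma_algebra F -> (forall U, opens U -> F U) -> F A.

Definition borelR : set_ (set_ R) := borel open_set.

Definition is_probability_measure (Omega : Type) (opens : set_ (set_ Omega))
    (mu : set_ Omega -> R) : Prop :=
  (forall A, borel opens A -> Rle 0 (mu A)) /\
  mu (fun _ => True) = R1 /\
  (forall A : nat -> set_ Omega,
     (forall n, borel opens (A n)) ->
     (forall n m w, n <> m -> A n w -> A m w -> False) ->
     infinite_sum (fun n : nat => mu (A n)) (mu (fun w => exists n, A n w))).

Definition preimage (A B : Type) (f : A -> B) (S : set_ B) : set_ A := fun a => S (f a).

Definition mpds (Omega : Type) (opens : set_ (set_ Omega)) (mu : set_ Omega -> R)
    (T : Omega -> Omega) : Prop :=
  (exists w : Omega, True) /\ is_topology opens /\ is_probability_measure opens mu /\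
  (forall B, borel opens B -> borel opens (preimage T B)) /\
  (forall B, borel opens B -> mu (preimage T B) = mu B).

Definition random_vector (Omega : Type) (opens : set_ (set_ Omega)) (N : nat)
    (X : 'I_N -> Omega -> R) : Prop :=
  forall i B, borelR B -> borel opens (preimage (X i) B).

Definition entropy (Omega : Type) (mu : set_ Omega -> R) (I : finType)
    (P : I -> set_ Omega) : R :=
  Ropp (\big[Rplus/R0]_(a : I) Rmult (mu (P a)) (ln (mu (P a)))).

(* The vector (x_0,...,x_d) has ordinal pattern pi = (r_0,...,r_d),
   r_l = pi l:  x_{r_{l-1}} >= x_{r_l}, and r_{l-1} > r_l in case of equality. *)
Definition has_pattern (d : nat) (x : 'I_d.+1 -> R) (pi : {perm 'I_d.+1}) : Prop :=
  forall k : 'I_d,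
    let a := pi (widen_ord (leqnSn d) k) in
    let b := pi (lift ord0 k) in
    Rge (x a) (x b) /\ (x a = x b -> (nat_of_ord b < nat_of_ord a)%N).

Definition pat_index (N d : nat) : finType := {ffun 'I_N -> {perm 'I_d.+1}}.

Definition ordinal_partition (Omega : Type) (T : Omega -> Omega) (N : nat)
    (X : 'I_N -> Omega -> R) (d : nat) (p : pat_index N d) : set_ Omega :=
  fun w => forall i : 'I_N,
    has_pattern (fun j : 'I_d.+1 => X i (iter (d - j) T w)) (p i).

Definition join2 (Omega : Type) (T : Omega -> Omega) (I : finType) (P : I -> set_ Omega)
    (ab : (I * I)%type) : set_ Omega :=
  fun w => P ab.1 w /\ P ab.2 (T w).

Definition perm_entropy (Omega : Type) (mu : set_ Omega -> R) (T : Omega -> Omega)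
    (N : nat) (X : 'I_N -> Omega -> R) (d : nat) : R :=
  Rmult (Rinv (INR d)) (entropy mu (ordinal_partition T X (d:=d))).

Definition sorting_entropy (Omega : Type) (mu : set_ Omega -> R) (T : Omega -> Omega)
    (N : nat) (X : 'I_N -> Omega -> R) (d : nat) : R :=
  Rminus (entropy mu (ordinal_partition T X (d:=d.+1))) (entropy mu (ordinal_partition T X (d:=d))).

Definition cond_entropy (Omega : Type) (mu : set_ Omega -> R) (T : Omega -> Omega)
    (N : nat) (X : 'I_N -> Omega -> R) (d : nat) : R :=
  Rminus (entropy mu (join2 T (ordinal_partition T X (d:=d))))
   (entropy mu (ordinal_partition T X (d:=d))).

(* Main.v *)
Require Import Defs.
From HB Require Import structures.
From Stdlib Require Import Reals Lra Classical FunctionalExtensionality PropExtensionality ClassicalEpsilon.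
From mathcomp Require Import all_boot all_fingroup.
Set Implicit Arguments. Unset Strict Implicit. Unset Printing Implicit Defensive.

Definition Rltb (u v : R) : bool := if Rlt_dec u v then true else false.
Definition Reqb (u v : R) : bool := if Req_EM_T u v then true else false.

Lemma RltbP (u v : R) : reflect (Rlt u v) (Rltb u v).
Proof. rewrite /Rltb; case: Rlt_dec => h; constructor; auto. Qed.
Lemma ReqbP (u v : R) : reflect (u = v) (Reqb u v).
Proof. rewrite /Reqb; case: Req_EM_T => h; constructor; auto. Qed.

Definition relb n (x : 'I_n -> R) (a b : 'I_n) : bool :=
  Rltb (x b) (x a) || (Reqb (x a) (x b) && (nat_of_ord b < nat_of_ord a)).

Lemma relbE n (x : 'I_n -> R) a b :
  relb x a b <-> (Rge (x a) (x b) /\ (x a = x b -> (nat_of_ord b < nat_of_ord a)%N)).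
Proof.
rewrite /relb; split.
- case/orP => [/RltbP h | /andP [/ReqbP h1 h2]]; split; try lra; auto.
- move=> [h1 h2]. case: (Rtotal_order (x b) (x a)) => [h|[h|h]].
  + by apply/orP; left; apply/RltbP.
  + apply/orP; right; apply/andP; split; [by apply/ReqbP | by apply h2].
  + lra.
Qed.

Lemma relb_irr n (x : 'I_n -> R) a : relb x a a = false.
Proof. by rewrite /relb ltnn andbF orbF; apply/RltbP; lra. Qed.

Lemma relb_trans n (x : 'I_n -> R) a b c : relb x a b -> relb x b c -> relb x a c.
Proof.
move=> /relbE [h1 h2] /relbE [h3 h4]; apply/relbE; split; first lra.
move=> e. have e1 : x a = x b by lra. have e2 : x b = x c by lra.
exact: ltn_trans (h4 e2) (h2 e1).
Qed.

Lemma relb_total n (x : 'I_n -> R) a b : a != b -> relb x a b || relb x b a.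
Proof.
move=> nab. rewrite /relb.
case: (Rtotal_order (x a) (x b)) => [h|[h|h]].
- by apply/orP; right; apply/orP; left; apply/RltbP.
- have : (nat_of_ord a != nat_of_ord b) by [].
  rewrite neq_ltn => /orP [l|l].
  + apply/orP; right; apply/orP; right; apply/andP; split => //; apply/ReqbP; auto.
  + apply/orP; left; apply/orP; right; apply/andP; split => //; apply/ReqbP; auto.
- by apply/orP; left; apply/orP; left; apply/RltbP.
Qed.

Lemma relb_asym n (x : 'I_n -> R) a b : relb x a b -> relb x b a = false.
move=> h; apply/negP => h'.
have := relb_trans h h'; by rewrite relb_irr.
Qed.

Lemma hpE d (x : 'I_d.+1 -> R) pi :
  has_pattern x pi <-> forall k : 'I_d, relb x (pi (widen_ord (leqnSn d) k)) (pi (lift ord0 k)).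
Proof.
rewrite /has_pattern; split => h k; [apply/relbE; exact: h | apply/relbE; exact: h].
Qed.

Lemma hp_chain d (x : 'I_d.+1 -> R) pi : has_pattern x pi ->
  forall k l : 'I_d.+1, nat_of_ord k < nat_of_ord l -> relb x (pi k) (pi l).
Proof.
move/hpE => h.
have base : forall k l : 'I_d.+1, nat_of_ord l = (nat_of_ord k).+1 -> relb x (pi k) (pi l).
  move=> k l e. have kd : nat_of_ord k < d by rewrite -ltnS -e ltn_ord.
  have := h (Ordinal kd).
  have -> : widen_ord (leqnSn d) (Ordinal kd) = k by apply: val_inj.
  have -> : lift ord0 (Ordinal kd) = l by apply: val_inj; rewrite /= /bump /= e.
  done.
suff : forall m (k l : 'I_d.+1), nat_of_ord l = nat_of_ord k + m.+1 -> relb x (pi k) (pi l).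
  move=> H k l kl. apply: (H (nat_of_ord l - nat_of_ord k).-1).
  by rewrite prednK ?subn_gt0 // subnKC // ltnW.
elim=> [|m IH] k l e; first by apply: base; rewrite e addn1.
have lm : (nat_of_ord k + m.+1) < d.+1 by apply: leq_ltn_trans (ltn_ord l); rewrite e leq_add2l.
apply: (relb_trans (IH k (Ordinal lm) erefl)). apply: base => /=. by rewrite e addnS.
Qed.

Lemma hp_rel d (x : 'I_d.+1 -> R) pi : has_pattern x pi ->
  forall a b, relb x a b = (nat_of_ord ((pi^-1)%g a) < nat_of_ord ((pi^-1)%g b)).
Proof.
move=> h a b.
have ch := hp_chain h.
case: (ltngtP (nat_of_ord ((pi^-1)%g a)) (nat_of_ord ((pi^-1)%g b))) => c.
- by have := ch _ _ c; rewrite !permKV.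
- have := ch _ _ c; rewrite !permKV => /relb_asym //.
- have : (pi^-1)%g a = (pi^-1)%g b by apply: val_inj.
  move/(congr1 pi); rewrite !permKV => ->. by rewrite relb_irr.
Qed.

Lemma card_lt n (k : 'I_n) : #|[pred c : 'I_n | nat_of_ord c < k]| = k.
Proof.
have kn : k <= n by apply: ltnW.
have inj : injective (widen_ord kn) by move=> u v /(congr1 val) /= e; apply: val_inj.
rewrite -[RHS](card_ord k) -(card_image inj). apply: eq_card => c /=.
apply/idP/imageP.
- move=> ck. by exists (Ordinal ck) => //; apply: val_inj.
- case=> u _ ->. by rewrite inE /= ltn_ord.
Qed.

Lemma card_perm_lt n (t : {perm 'I_n}) a :
  #|[pred b | nat_of_ord (t b) < nat_of_ord (t a)]| = t a.
Proof.
rewrite -[RHS](card_lt (t a)).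
have := card_preimset [set c : 'I_n | nat_of_ord c < t a] (@perm_inj _ t).
have -> : #|[set c : 'I_n | nat_of_ord c < t a]| = #|[pred c : 'I_n | nat_of_ord c < t a]|.
  by apply: eq_card => c; rewrite inE.
move=> <-. apply: eq_card => b; by rewrite !inE.
Qed.

Lemma hp_unique d (x : 'I_d.+1 -> R) pi pi' :
  has_pattern x pi -> has_pattern x pi' -> pi = pi'.
Proof.
move=> h h'.
suff e : (pi^-1)%g = (pi'^-1)%g by rewrite -(invgK pi) e invgK.
apply/permP => a. apply: ord_inj.
rewrite -card_perm_lt -[RHS]card_perm_lt. apply: eq_card => b /=.
by rewrite !inE /= -(hp_rel h) -(hp_rel h').
Qed.

Definition rank n (x : 'I_n -> R) (a : 'I_n) : nat := #|[pred b | relb x b a]|.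

Lemma rank_lt n (x : 'I_n -> R) a : rank x a < n.
Proof.
rewrite /rank. suff h : #|[pred b | relb x b a]| < #|'I_n| by rewrite card_ord in h.
apply: proper_card. apply/properP; split.
- by apply/subsetP.
- exists a => //. by rewrite inE /= relb_irr.
Qed.

Lemma rank_mono n (x : 'I_n -> R) a b : relb x a b -> rank x a < rank x b.
Proof.
move=> h. apply: proper_card. apply/properP; split.
- apply/subsetP => c; rewrite !inE /= => h'. exact: relb_trans h' h.
- exists a; by rewrite !inE /= ?relb_irr.
Qed.

Lemma hp_exists d (x : 'I_d.+1 -> R) : exists pi, has_pattern x pi.
Proof.
pose s (a : 'I_d.+1) : 'I_d.+1 := Ordinal (rank_lt x a).
have sinj : injective s.
  move=> a b /(congr1 val) /= e. apply/eqP/negPn/negP => nab.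
  case/orP: (relb_total x nab) => /rank_mono; rewrite e ltnn //.
exists ((perm sinj)^-1)%g. apply/hpE => k.
set a := _ (widen_ord _ k). set b := _ (lift ord0 k).
have ea : nat_of_ord (s a) = k by rewrite /a -permE permKV.
have eb : nat_of_ord (s b) = k.+1 by rewrite /b -permE permKV /= /bump.
have nab : a != b.
  apply/negP => /eqP e. move: eb; rewrite -e ea => /eqP. by rewrite eqn_leq ltnn andbF.
case/orP: (relb_total x nab) => // /rank_mono.
have -> : rank x b = k.+1 by rewrite -eb.
have -> : rank x a = k by rewrite -ea.
by rewrite ltnNge leqnSn.
Qed.

Delimit Scope R_scope with Re.
HB.instance Definition _ := Monoid.isComLaw.Build R R0 Rplus
  (fun x y z => esym (Rplus_assoc x y z)) Rplus_comm Rplus_0_l.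

Section Meas.
Variable Omega : Type.
Variable opens : set_ (set_ Omega).

Lemma borel_ext (A B : set_ Omega) : (forall w, A w <-> B w) -> borel opens A -> borel opens B.
Proof.
move=> h; have -> // : A = B.
apply: functional_extensionality => w; apply: propositional_extensionality; exact: h.
Qed.

Lemma borel_T : borel opens (fun _ => True).
Proof. by move=> F [hT _] _. Qed.

Lemma borel_C A : borel opens A -> borel opens (fun w => ~ A w).
Proof. move=> h F hF ho. apply: (proj1 (proj2 hF)). exact: h. Qed.

Lemma borel_U (A : nat -> set_ Omega) : (forall n, borel opens (A n)) ->
  borel opens (fun w => exists n, A n w).
Proof. move=> h F hF ho. apply: (proj2 (proj2 hF)) => n. exact: h. Qed.

Lemma borel_0 : borel opens (fun _ => False).
Proof. apply: borel_ext (borel_C borel_T) => w; tauto. Qed.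

Lemma borel_U2 A B : borel opens A -> borel opens B -> borel opens (fun w => A w \/ B w).
Proof.
move=> hA hB.
apply: (borel_ext (A := fun w => exists n, (if n is 0 then A else B) w)).
- move=> w; split; [by case=> [[|n] h]; auto | case=> h; [by exists 0 | by exists 1]].
- by apply: borel_U => [[|n]].
Qed.

Lemma borel_I2 A B : borel opens A -> borel opens B -> borel opens (fun w => A w /\ B w).
Proof.
move=> hA hB.
apply: (borel_ext (A := fun w => ~ ((~ A w) \/ (~ B w)))).
- move=> w; split; [move=> h; split; apply: NNPP => h'; apply: h; auto | tauto].
- by apply: borel_C; apply: borel_U2; apply: borel_C.
Qed.

Lemma borel_Iseq (I : eqType) (s : seq I) (A : I -> set_ Omega) :
  (forall i, borel opens (A i)) -> borel opens (fun w => forall i, i \in s -> A i w).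
Proof.
move=> h; elim: s => [|x s IH].
- apply: borel_ext borel_T => w; split => // _ i; by rewrite in_nil.
- apply: (borel_ext (A := fun w => A x w /\ (forall i, i \in s -> A i w))).
  + move=> w; split.
    * move=> [h1 h2] i; rewrite in_cons => /orP [/eqP -> // | ]; exact: h2.
    * move=> h'; split; [apply: h'; exact: mem_head | move=> i hi; apply: h'; by rewrite in_cons hi orbT].
  + exact: borel_I2.
Qed.

Lemma borel_Ifin (I : finType) (A : I -> set_ Omega) :
  (forall i, borel opens (A i)) -> borel opens (fun w => forall i, A i w).
Proof.
move=> h; apply: borel_ext (borel_Iseq (index_enum I) h) => w; split => h' i.
- apply: h'; by rewrite mem_index_enum.
- move=> _; exact: h'.
Qed.

Lemma borel_Useq (I : eqType) (s : seq I) (A : I -> set_ Omega) :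
  (forall i, borel opens (A i)) -> borel opens (fun w => exists i, i \in s /\ A i w).
Proof.
move=> h; elim: s => [|x s IH].
- apply: borel_ext borel_0 => w; split => // [[i [ ]]]; by rewrite in_nil.
- apply: (borel_ext (A := fun w => A x w \/ (exists i, i \in s /\ A i w))).
  + move=> w; split.
    * case=> [hx | [i [hi hA]]]; [exists x; split => //; exact: mem_head | exists i; by rewrite in_cons hi orbT].
    * move=> [i []]; rewrite in_cons => /orP [/eqP -> | hi hA]; auto. right; by exists i.
  + exact: borel_U2.
Qed.

Variable mu : set_ Omega -> R.
Hypothesis hmu : is_probability_measure opens mu.

Lemma mu_ge0 A : borel opens A -> Rle 0 (mu A).
Proof. exact: (proj1 hmu). Qed.

Lemma mu0 : mu (fun _ => False) = R0.
Proof.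
have h := proj2 (proj2 hmu) (fun _ _ => False) (fun _ => borel_0) (fun _ _ _ _ f _ => f).
have e : (fun w : Omega => exists _ : nat, False) = (fun _ => False).
  apply: functional_extensionality => w; apply: propositional_extensionality; split => //; by case.
rewrite e in h. set c := mu _ in h *.
case: (Req_dec c 0) => // nc.
have pc : Rlt 0 (Rabs c) by apply: Rabs_pos_lt.
have [N HN] := h (Rabs c / 4)%Re ltac:(lra).
have h1 := HN N (le_n N). have h2 := HN N.+1 (le_S _ _ (le_n N)).
rewrite /Rdist !sum_cte in h1 h2. rewrite (S_INR N.+1) in h2.
exfalso. move: h1 h2. set t := INR N.+1. move=> h1 h2.
have e2 : (c * (t + 1) - c = (c * t - c) + c)%Re by ring.
rewrite e2 in h2.
have := Rabs_triang (c * t - c + c) (- (c * t - c)).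
rewrite Rabs_Ropp. have -> : (c * t - c + c + - (c * t - c) = c)%Re by ring.
lra.
Qed.

Lemma mu_add2 A B : borel opens A -> borel opens B -> (forall w, A w -> B w -> False) ->
  mu (fun w => A w \/ B w) = (mu A + mu B)%Re.
Proof.
move=> hA hB dAB.
pose g (n : nat) : set_ Omega := if n is 0 then A else if n is 1 then B else (fun _ => False).
have hg : forall n, borel opens (g n) by case=> [|[|n]] //=; exact: borel_0.
have dg : forall n m w, n <> m -> g n w -> g m w -> False.
  case=> [|[|n]] [|[|m]] w /= nm h1 h2; first [by apply: nm | exact: dAB h1 h2 | exact: dAB h2 h1 | contradiction].
have h := proj2 (proj2 hmu) g hg dg.
have e : (fun w => exists n, g n w) = (fun w => A w \/ B w).
  apply: functional_extensionality => w; apply: propositional_extensionality; split.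
  - by case=> [[|[|n]]] /= h'; auto.
  - by case=> h'; [exists 0 | exists 1].
rewrite e in h. refine (uniqueness_sum _ _ _ h _) => eps heps. exists 1%N => n hn.
have -> : sum_f_R0 (fun n => mu (g n)) n = (mu A + mu B)%Re.
  case: n hn => [hn|n _]; first by inversion hn.
  elim: n => [|n IH] //.
  change (sum_f_R0 (fun n => mu (g n)) n.+2) with (sum_f_R0 (fun n => mu (g n)) n.+1 + mu (g n.+2))%Re.
  rewrite IH /= mu0. ring.
by rewrite /Rdist Rminus_diag Rabs_R0.
Qed.

Lemma mu_seq (I : eqType) (s : seq I) (A : I -> set_ Omega) :
  uniq s -> (forall i, borel opens (A i)) ->
  (forall i j w, A i w -> A j w -> i = j) ->
  mu (fun w => exists i, i \in s /\ A i w) = \big[Rplus/R0]_(i <- s) mu (A i).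
Proof.
move=> us hA dA; elim: s us => [|x s IH] us.
- rewrite big_nil -mu0. f_equal; apply: functional_extensionality => w;
  apply: propositional_extensionality; split => // [[i []]]; by rewrite in_nil.
- move: us => /= /andP [xs us]. rewrite big_cons -IH //.
  rewrite -mu_add2 //; last first.
  + move=> w hx [i [hi hi']]. have ex := dA _ _ _ hx hi'. by rewrite ex hi in xs.
  + exact: borel_Useq.
  f_equal; apply: functional_extensionality => w; apply: propositional_extensionality; split.
  * move=> [i []]; rewrite in_cons => /orP [/eqP -> | hi hA']; auto. right; by exists i.
  * case=> [hx | [i [hi hA']]]; [exists x; split => //; exact: mem_head | exists i; by rewrite in_cons hi orbT].
Qed.

Lemma xlnx_le (a b : R) : Rle 0 a -> Rle a b -> Rle (a * ln a) (a * ln b).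
Proof.
move=> ha hab. case: (Rle_lt_or_eq_dec 0 a ha) => h.
- apply: Rmult_le_compat_l => //.
  case: (Rle_lt_or_eq_dec a b hab) => h'; last by rewrite h'; lra.
  left; exact: ln_increasing.
- rewrite -h !Rmult_0_l; lra.
Qed.

Lemma refine_entropy (I J : finType) (P : I -> set_ Omega) (Q : J -> set_ Omega) :
  (forall i, borel opens (P i)) ->
  (forall i i' w, P i w -> P i' w -> i = i') ->
  (forall w, exists i, P i w) ->
  (forall j j' w, Q j w -> Q j' w -> j = j') ->
  (forall i, exists j, forall w, P i w -> Q j w) ->
  Rle (entropy mu Q) (entropy mu P).
Proof.
move=> hP dP cP dQ rPQ.
pose f i := proj1_sig (constructive_indefinite_description _ (rPQ i)).
have hf : forall i w, P i w -> Q (f i) w.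
  move=> i; exact: (proj2_sig (constructive_indefinite_description _ (rPQ i))).
have eQ : forall j, mu (Q j) = \big[Rplus/R0]_(i | f i == j) mu (P i).
  move=> j. rewrite -big_filter -mu_seq //; last by rewrite filter_uniq // index_enum_uniq.
  f_equal; apply: functional_extensionality => w; apply: propositional_extensionality; split.
  - move=> hq. have [i hi] := cP w. exists i; rewrite mem_filter mem_index_enum andbT.
    split => //. by rewrite (dQ _ _ _ (hf _ _ hi) hq).
  - move=> [i []]; rewrite mem_filter mem_index_enum andbT => /eqP <-; exact: hf.
have ge0 : forall i, Rle 0 (mu (P i)) by move=> i; apply: mu_ge0.
have le : forall i, Rle (mu (P i)) (mu (Q (f i))).
  move=> i. rewrite eQ (bigD1 i) //=.
  have : Rle 0 (\big[Rplus/R0]_(k | (f k == f i) && (k != i)) mu (P k)).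
    apply: big_ind => //; [lra | move=> x y hx hy; lra].
  lra.
rewrite /entropy; apply: Ropp_le_contravar.
rewrite (partition_big f xpredT) //.
apply: (big_ind2 (fun a b => Rle a b)); [apply: Rle_refl | move=> *; exact: Rplus_le_compat | move=> j _].
rewrite (eq_bigl (fun i => f i == j)) //.
have -> : (mu (Q j) * ln (mu (Q j)) =
   \big[Rplus/R0]_(i | f i == j) (mu (P i) * ln (mu (Q j))))%Re.
  rewrite {1}eQ. apply: (big_ind2 (fun a b => a * ln (mu (Q j)) = b)%Re).
  - by rewrite Rmult_0_l.
  - move=> x1 x2 y1 y2 <- <-; ring.
  - by [].
apply: (big_ind2 (fun a b => Rle a b)); [apply: Rle_refl | move=> *; exact: Rplus_le_compat | move=> i /eqP <-].
exact: xlnx_le.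
Qed.
End Meas.

Lemma Z_as_nat (z : Z) : exists m k : nat, IZR z = (INR m - INR k)%Re.
Proof.
case: z => [|p|p].
- exists 0%N, 0%N. change (INR 0) with 0%Re. change (IZR 0) with 0%Re. lra.
- exists (Pos.to_nat p), 0%N. rewrite INR_IPR. change (INR 0) with 0%Re. change (IZR (Zpos p)) with (IPR p). lra.
- exists 0%N, (Pos.to_nat p). rewrite INR_IPR. change (INR 0) with 0%Re. change (IZR (Zneg p)) with (- IPR p)%Re. lra.
Qed.

Lemma open_lt (q : R) : open_set (fun y => Rlt y q).
Proof.
move=> x hx. have hd : Rlt 0 (q - x) by lra.
exists (mkposreal _ hd) => y; rewrite /disc /=. move=> h.
have := Rle_abs (y - x). lra.
Qed.

Lemma open_gt (q : R) : open_set (fun y => Rlt q y).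
Proof.
move=> x hx. have hd : Rlt 0 (x - q) by lra.
exists (mkposreal _ hd) => y; rewrite /disc /=. move=> h.
have := Rle_abs (- (y - x)). rewrite Rabs_Ropp. lra.
Qed.

Lemma borelR_open (D : R -> Prop) : open_set D -> borelR D.
Proof. move=> h F _ ho; exact: ho. Qed.

Section Meas2.
Variable Omega : Type.
Variable opens : set_ (set_ Omega).

Definition meas (f : Omega -> R) := forall B, borelR B -> borel opens (preimage f B).

Lemma lt_borel f g : meas f -> meas g -> borel opens (fun w => Rlt (f w) (g w)).
Proof.
move=> hf hg.
pose q (n m k : nat) := ((INR m - INR k) / INR n)%Re.
apply: (borel_ext (A := fun w => exists n, exists m, exists k,
   Rlt (f w) (q n m k) /\ Rlt (q n m k) (g w))).
- move=> w; split.
  + case=> n [m [k [h1 h2]]]; lra.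
  + move=> h. set a := f w in h *. set b := g w in h *.
    have [N [hN N0]] := archimed_cor1 (b - a) ltac:(lra).
    have cpos : Rlt 0 (INR N) by apply: lt_0_INR; first [exact: N0 | apply/ltP; exact: N0].
    have [hz1 hz2] := archimed (a * INR N).
    have [m [k hmk]] := Z_as_nat (up (a * INR N)).
    exists N, m, k. rewrite /q -hmk.
    set z := IZR _ in hz1 hz2 *. set c := INR N in cpos hN hz1 hz2 *.
    have e : (z / c * c = z)%Re by field; lra.
    have e2 : (/ c * c = 1)%Re by field; lra.
    set Q := (z / c)%Re in e *. split.
    * apply: (Rmult_lt_reg_r c) => //. rewrite e. lra.
    * have : Rle Q (a + / c).
        apply: (Rmult_le_reg_r c) => //. rewrite e Rmult_plus_distr_r e2. lra.
      lra.
- apply: borel_U => n; apply: borel_U => m; apply: borel_U => k.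
  apply: borel_I2.
  + exact: (hf _ (borelR_open (@open_lt (q n m k)))).
  + exact: (hg _ (borelR_open (@open_gt (q n m k)))).
Qed.

Lemma le_borel f g : meas f -> meas g -> borel opens (fun w => Rle (f w) (g w)).
Proof.
move=> hf hg. apply: borel_ext (borel_C (lt_borel hg hf)) => w. split; [apply: Rnot_lt_le | apply: Rle_not_lt].
Qed.

End Meas2.

Lemma relb_sub n m (x : 'I_m -> R) (h : 'I_n -> 'I_m) :
  (forall a b : 'I_n, (nat_of_ord (h a) < nat_of_ord (h b)) = (nat_of_ord a < nat_of_ord b)) ->
  forall a b, relb (fun j => x (h j)) a b = relb x (h a) (h b).
Proof. by move=> hh a b; rewrite /relb hh. Qed.

Lemma hp_transfer d (x x' : 'I_d.+1 -> R) pi :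
  (forall a b, relb x a b = relb x' a b) -> has_pattern x pi -> has_pattern x' pi.
Proof. move=> e /hpE h; apply/hpE => k; by rewrite -e. Qed.

Lemma same_pattern_rel d (x y : 'I_d.+1 -> R) pi :
  has_pattern x pi -> has_pattern y pi -> forall a b, relb x a b = relb y a b.
Proof. by move=> hx hy a b; rewrite (hp_rel hx) (hp_rel hy). Qed.

Section Main.
Variable Omega : Type.
Variable opens : set_ (set_ Omega).
Variable T : Omega -> Omega.
Variable N : nat.
Variable X : 'I_N -> Omega -> R.
Hypothesis hT : forall B, borel opens B -> borel opens (preimage T B).
Hypothesis hX : random_vector opens X.

Definition win d (i : 'I_N) w : 'I_d.+1 -> R := fun j => X i (iter (d - j) T w).
Arguments win : clear implicits.

Lemma iter_borel k B : borel opens B -> borel opens (preimage (iter k T) B).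
Proof.
elim: k B => [|k IH] B hB //.
apply: (borel_ext (A := preimage (iter k T) (preimage T B))).
- move=> w; by rewrite /preimage iterS.
- exact: IH (hT hB).
Qed.

Lemma meas_comp i k : meas opens (fun w => X i (iter k T w)).
Proof. move=> B hB. exact: (iter_borel k (hX i hB)). Qed.

Lemma relb_borel d (a b : 'I_d.+1) (i : 'I_N) :
  borel opens (fun w => relb (win d i w) a b).
Proof.
case hba: (nat_of_ord b < nat_of_ord a).
- apply: (borel_ext (A := fun w => Rle (win d i w b) (win d i w a))).
  + move=> w; rewrite relbE; split.
    * move=> h; split; [exact: Rle_ge | by rewrite hba].
    * by move=> [h _]; apply: Rge_le.
  + exact: (le_borel (meas_comp i (d - b)) (meas_comp i (d - a))).
- apply: (borel_ext (A := fun w => Rlt (win d i w b) (win d i w a))).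
  + move=> w; rewrite relbE; split.
    * move=> h; split; [left; exact: h | move=> e; exfalso; lra].
    * move=> [h1 h2]; case: (Rge_gt_or_eq_dec _ _ h1) => // e; by rewrite h2 in hba.
  + exact: (lt_borel (meas_comp i (d - b)) (meas_comp i (d - a))).
Qed.

Lemma cell_borel d (p : pat_index N d) : borel opens (ordinal_partition T X p).
Proof.
apply: (borel_ext (A := fun w => forall i, forall k : 'I_d,
   relb (win d i w) (p i (widen_ord (leqnSn d) k)) (p i (lift ord0 k)))).
- move=> w; rewrite /ordinal_partition; split => h i; [apply/hpE; exact: h | apply/hpE; exact: h].
- apply: borel_Ifin => i; apply: borel_Ifin => k; exact: relb_borel.
Qed.

Lemma cell_disj d (p p' : pat_index N d) w :
  ordinal_partition T X p w -> ordinal_partition T X p' w -> p = p'.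
Proof. move=> h h'; apply/ffunP => i; exact: hp_unique (h i) (h' i). Qed.

Lemma cell_cover d w : exists p : pat_index N d, ordinal_partition T X p w.
Proof.
exists [ffun i => proj1_sig (constructive_indefinite_description _ (hp_exists (win d i w)))].
move=> i; rewrite ffunE. exact: (proj2_sig (constructive_indefinite_description _ (hp_exists (win d i w)))).
Qed.

Lemma win_l d i w : win d i w = (fun j => win d.+1 i w (lift ord0 j)).
Proof. apply: functional_extensionality => j. by rewrite /win /= /bump /= add1n subSS. Qed.

Lemma win_r d i w : win d i (T w) = (fun j => win d.+1 i w (widen_ord (leqnSn d.+1) j)).
Proof.
apply: functional_extensionality => j. rewrite /win /= subSn; last by rewrite -ltnS ltn_ord.
by rewrite iterSr.
Qed.

Lemma refine d (p : pat_index N d.+1) : exists j : (pat_index N d * pat_index N d)%type,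
  forall w, ordinal_partition T X p w -> join2 T (ordinal_partition T X (d:=d)) j w.
Proof.
case: (classic (exists w0, ordinal_partition T X p w0)) => [[w0 h0] | hn]; last first.
- exists ([ffun _ => 1%g], [ffun _ => 1%g]) => w hw; exfalso; apply: hn; by exists w.
- have [j1 hj1] := cell_cover d w0. have [j2 hj2] := cell_cover d (T w0).
  exists (j1, j2) => w hw; split => /= i.
  + apply: (hp_transfer _ (hj1 i)) => a b.
    change (relb (win d i w0) a b = relb (win d i w) a b).
    rewrite (win_l d i w0) (win_l d i w) !relb_sub //. apply: (same_pattern_rel (pi := p i)); [exact: (h0 i) | exact: (hw i)].
  + apply: (hp_transfer _ (hj2 i)) => a b.
    change (relb (win d i (T w0)) a b = relb (win d i (T w)) a b).
    rewrite (win_r d i w0) (win_r d i w) !relb_sub //. apply: (same_pattern_rel (pi := p i)); [exact: (h0 i) | exact: (hw i)].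
Qed.

End Main.

Theorem lemma3 (Omega : Type) (opens : (Omega -> Prop) -> Prop)
  (mu : (Omega -> Prop) -> R) (T : Omega -> Omega) (N : nat) (X : 'I_N -> Omega -> R) :
  mpds opens mu T -> random_vector opens X ->
  (forall d : nat, (1 <= d)%N ->
     Rle (cond_entropy mu T X d) (sorting_entropy mu T X d)) /\
  (forall d0 : nat, (1 <= d0)%N ->
     Rle (perm_entropy mu T X d0.+1) (perm_entropy mu T X d0) ->
     Rle (cond_entropy mu T X d0) (sorting_entropy mu T X d0) /\
     Rle (sorting_entropy mu T X d0) (perm_entropy mu T X d0)).
Proof.
move=> [_ [_ [hmu [hT _]]]] hX.
have part1 : forall d, (1 <= d)%N -> Rle (cond_entropy mu T X d) (sorting_entropy mu T X d).
  move=> d _. rewrite /cond_entropy /sorting_entropy /Rminus. apply: Rplus_le_compat_r.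
  apply: (refine_entropy hmu).
  - move=> i; exact: (cell_borel hT hX i).
  - move=> i i' w; exact: cell_disj.
  - exact: cell_cover.
  - move=> [j1 j2] [j1' j2'] w [h1 h2] [h1' h2'].
    by rewrite /= in h1 h2 h1' h2'; rewrite (cell_disj h1 h1') (cell_disj h2 h2').
  - exact: refine.
split => //. move=> d0 hd0 hperm. split; first exact: part1.
move: hperm. rewrite /perm_entropy /sorting_entropy S_INR.
set H1 := entropy _ _. set H0 := entropy _ _.
have np : Rlt 0 (INR d0) by apply: lt_0_INR; apply/ltP.
set n := INR d0 in np *. move=> h.
have h' := Rmult_le_compat_l (n + 1) _ _ ltac:(lra) h.
have e1 : ((n + 1) * (/ (n + 1) * H1) = H1)%Re by field; lra.
have e2 : ((n + 1) * (/ n * H0) = H0 + / n * H0)%Re by field; lra.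
rewrite e1 e2 in h'. rewrite /Rminus. lra.
Qed.
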